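(* Let $\mathfrak M$ (modelled on $X$) be a Banach manifold with chart family $\mathscr A$ and $\mathfrak M_0$ (modelled on $X_0$) a $C^1$-embedded Banach submanifold of $\mathfrak M$ with respect to $\mathscr A$, such that $(\mathfrak M,\mathfrak M_0,\mathscr A)$ is inward spreadable. Let $\eta\in\mathfrak M_0$ and let $f:(-\varepsilon,\varepsilon)\to\mathfrak M_0$ with $f(0)=\eta$ be strongly differentiable at $t=0$. Then $f$ is fully differentiable at $t=0$: for every $\mathfrak M_0$-regular chart $(\mathcal U,\varphi)$ at $\eta$ the map $t\mapsto\varphi(f(t))$ is differentiable at $t=0$ in the topology of $X$, and for any two $\mathfrak M_0$-regular charts $(\mathcal U,\varphi),(\mathcal V,\psi)$ at $\eta$, $$(\psi\circ f)'(0)=(\psi\circ\varphi^{-1})'(\varphi(\eta))\,(\varphi\circ f)'(0).$$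
   Context: Densely embedded spaces and the class $\mathfrak C^k$. For Banach spaces $X$ and $X_0$, $X_0$ is a densely embedded Banach subspace of $X$ if $X_0$ is a dense linear subspace of $X$ and there is $C>0$ with $\|x\|_X\le C\|x\|_{X_0}$ for $x\in X_0$. For such $X_0\subseteq X$, a Banach space $Y$, an open set $U_0\subseteq X_0$ and an integer $k\ge1$, $\mathfrak C^k(U_0;X,Y)$ denotes the set of maps $F:U_0\to Y$ such that (i) for each $x_0\in U_0$ there are bounded symmetric $j$-linear maps $F^{(j)}(x_0):X^j\to Y$, $1\le j\le k$, with $\|F(x)-F(x_0)-\sum_{j=1}^k\frac1{j!}F^{(j)}(x_0)(x-x_0,\dots,x-x_0)\|_Y/\|x-x_0\|_{X_0}^k\to0$ as $\|x-x_0\|_{X_0}\to0$, and (ii) $x\mapsto F^{(j)}(x)$ is continuous from $U_0$ (with the $X_0$-topology) into the space $L^j(X,Y)$ of bounded $j$-linear maps. We write $F'=F^{(1)}$. Embedded submanifolds. Let $\mathfrak M,\mathfrak M_0$ be topological Banach manifolds modelled on $X$, $X_0$, let $\mathscr A$ be a family of local charts of $\mathfrak M$, and $k\ge1$. $\mathfrak M_0$ is a $C^k$-embedded Banach submanifold of $\mathfrak M$ with respect to $\mathscr A$ if: (D1) $X_0$ is a densely embedded Banach subspace of $X$; (D2) $\mathfrak M_0\subseteq\mathfrak M$ and $\mathcal U\cap\mathfrak M_0$ is open in $\mathfrak M_0$ for every open $\mathcal U\subseteq\mathfrak M$; (D3) the domains of the charts of $\mathscr A$ cover $\mathfrak M$;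 (D4) for $\eta\in\mathfrak M_0$ and $(\mathcal U,\varphi)\in\mathscr A$ with $\eta\in\mathcal U$, $(\mathcal U_0,\varphi|_{\mathcal U_0})$ with $\mathcal U_0:=\mathcal U\cap\mathfrak M_0$ is a local chart of $\mathfrak M_0$; (D5) for $\eta\in\mathfrak M_0$ and $(\mathcal U,\varphi),(\mathcal V,\psi)\in\mathscr A$ with $\eta\in\mathcal U\cap\mathcal V$, $\psi\circ\varphi^{-1}\in\mathfrak C^k(\varphi(\mathcal U_0\cap\mathcal V_0);X,X)$ and $\varphi\circ\psi^{-1}\in\mathfrak C^k(\psi(\mathcal U_0\cap\mathcal V_0);X,X)$. A chart of $\mathscr A$ whose domain contains $\eta$ is an $\mathfrak M_0$-regular local chart at $\eta$. $(\mathfrak M,\mathfrak M_0,\mathscr A)$ (with $\mathfrak M_0$ $C^1$-embedded) is inward spreadable if there is a Banach manifold $\mathfrak M_1\subseteq\mathfrak M_0$, modelled on a Banach space $X_1$, which is a $C^1$-embedded Banach submanifold of $\mathfrak M_0$ with respect to the restrictions to $\mathfrak M_0$ of the charts of $\mathscr A$ ($\mathfrak M_1$ is then an inner $C^1$-kernel and the charts of $\mathscr A$ are called $(\mathfrak M_0,\mathfrak M_1)$-regular). For charts at $\eta\in\mathfrak M_0$, $(\varphi\circ\psi^{-1})'(\psi(\eta))\in L(X)$ is the first derivative in the $\mathfrak C^1$ sense. A curve $f:(-\varepsilon,\varepsilon)\to\mathfrak M_0$ with $f(0)=\eta$ is strongly differentiable at $t=0$ if for some $\mathfrak M_0$-regular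 chart $\varphi$ at $\eta$, $t\mapsto\varphi(f(t))$ is differentiable at $t=0$ in the topology of $X_0$. *)

(* Defs.v *)
From HB Require Import structures.
From mathcomp Require Import all_boot all_order all_algebra.
From mathcomp Require Import all_classical all_reals all_analysis.
Set Implicit Arguments. Unset Strict Implicit. Unset Printing Implicit Defensive.
Import Order.TTheory GRing.Theory Num.Theory.
Import numFieldNormedType.Exports.
Local Open Scope classical_set_scope.
Local Open Scope ring_scope.

Section Defs.
Variable R : realType.

(* (U, phi) is a local chart of the topological space M modelled on X:
   U is open, phi restricted to U is a homeomorphism onto an open subset of X
   (injective and continuous on U, and an open map on U). *)
Definition is_chart (M : topologicalType) (X : normedModType R)
    (U : set M) (phi : M -> X) : Prop :=
  [/\ open U, {in U &, injective phi}, {within U, continuous phi} &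
      forall V : set M, open V -> V `<=` U -> open (phi @` V)].

Definition banach_manifold (M : topologicalType) (X : completeNormedModType R) : Prop :=
  forall p : M, exists U (phi : M -> X), is_chart U phi /\ U p.

Definition densely_embedded (X X0 : completeNormedModType R) (i : {linear X0 -> X}) : Prop :=
  [/\ injective i, dense (range i) & exists2 C : R, 0 < C & forall x, `|i x| <= C * `|x|].

Definition frakC1 (X X0 : completeNormedModType R) (i : {linear X0 -> X})
    (Y : completeNormedModType R) (U0 : set X0) (F : X0 -> Y)
    (DF : X0 -> {linear X -> Y}) : Prop :=
  [/\ open U0,
      (forall x0, U0 x0 -> exists C : R, forall h, `|DF x0 h| <= C * `|h|),
      (forall x0, U0 x0 ->
         (fun x => `|F x - F x0 - DF x0 (i x - i x0)| / `|x - x0|) @ x0^' --> (0 : R)) &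
      (* continuity of x |-> DF x from U0 (X0-topology) into L(X, Y) (operator norm) *)
      (forall x0, U0 x0 -> forall e : R, 0 < e ->
         \forall x \near x0, forall h : X, `|DF x h - DF x0 h| <= e * `|h|)].

Definition restricts (X X0 : completeNormedModType R) (i : {linear X0 -> X})
    (M M0 : topologicalType) (j : M0 -> M) (c : set M * (M -> X)) (phi0 : M0 -> X0) :=
  forall m : M0, c.1 (j m) -> i (phi0 m) = c.2 (j m).

(* The transition map  d.2 o c.2^{-1}  on c.2(U0 /\ V0), with U0, V0 the traces on M0,
   is in frak C^1 (..; X, X). *)
Definition transition_C1 (X X0 : completeNormedModType R) (i : {linear X0 -> X})
    (M M0 : topologicalType) (j : M0 -> M) (c d : set M * (M -> X)) :=
  forall phi0 : M0 -> X0, restricts i j c phi0 ->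
  exists (F : X0 -> X) (DF : X0 -> {linear X -> X}),
    (forall m, c.1 (j m) -> d.1 (j m) -> F (phi0 m) = d.2 (j m)) /\
    frakC1 i (phi0 @` (j @^-1` (c.1 `&` d.1))) F DF.

Definition C1_embedded (X X0 : completeNormedModType R) (i : {linear X0 -> X})
    (M M0 : topologicalType) (j : M0 -> M) (A : set (set M * (M -> X))) : Prop :=
  [/\
      (forall c, A c -> is_chart c.1 c.2) /\
      densely_embedded i,
      (injective j /\ (forall U : set M, open U -> open (j @^-1` U))),
      (forall p : M, exists c, (A c /\ c.1 p)),
      (forall (eta : M0) c, A c -> c.1 (j eta) ->
                  exists phi0 : M0 -> X0, restricts i j c phi0 /\
                    is_chart (j @^-1` c.1) phi0) &
      (forall (eta : M0) c d, A c -> A d -> c.1 (j eta) -> d.1 (j eta) ->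
                  transition_C1 i j c d /\ transition_C1 i j d c)].

Definition restrict_atlas (X X0 : completeNormedModType R) (i : {linear X0 -> X})
    (M M0 : topologicalType) (j : M0 -> M) (A : set (set M * (M -> X)))
    : set (set M0 * (M0 -> X0)) :=
  [set c | exists2 d, A d & c.1 = j @^-1` d.1 /\ restricts i j d c.2].

Definition inward_spreadable (X X0 : completeNormedModType R) (i : {linear X0 -> X})
    (M M0 : topologicalType) (j : M0 -> M) (A : set (set M * (M -> X))) : Prop :=
  exists (X1 : completeNormedModType R) (i1 : {linear X1 -> X0})
         (M1 : topologicalType) (j1 : M1 -> M0),
    banach_manifold M1 X1 /\ C1_embedded i1 j1 (restrict_atlas i j A).

Definition strongly_differentiable_at0 (X X0 : completeNormedModType R)
    (i : {linear X0 -> X}) (M M0 : topologicalType) (j : M0 -> M)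
    (A : set (set M * (M -> X))) (f : R -> M0) : Prop :=
  exists (c : set M * (M -> X)) (phi0 : M0 -> X0),
    [/\ A c, c.1 (j (f 0)), restricts i j c phi0,
        (\forall t \near (0 : R), c.1 (j (f t))) &
        derivable (fun t : R => phi0 (f t)) 0 1].

End Defs.

(* Main.v *)
Require Import Defs.
From HB Require Import structures.
From mathcomp Require Import all_boot all_order all_algebra.
From mathcomp Require Import all_classical all_reals all_analysis.
From mathcomp Require Import lra.
Import Order.TTheory GRing.Theory Num.Theory.
Import numFieldNormedType.Exports.
Local Open Scope classical_set_scope.
Local Open Scope ring_scope.

Lemma near0P {R : realType} {P : R -> Prop} :
  (\forall h \near (0:R), P h) -> exists2 d : R, 0 < d & forall h, `|h| < d -> P h.
Proof.
move=> /nbhs_ballP [d d0 Hd]; exists d => // h hd; apply: Hd.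
by rewrite -ball_normE /= sub0r normrN.
Qed.

Lemma minpos {R : realType} {a b : R} : 0 < a -> 0 < b ->
  exists m : R, [/\ 0 < m, m < a & m < b].
Proof.
move=> a0 b0; exists (Num.min a b / 2).
have h1 : Num.min a b <= a by rewrite ge_min lexx.
have h2 : Num.min a b <= b by rewrite ge_min lexx orbT.
have h3 : 0 < Num.min a b by rewrite lt_min a0 b0.
split; lra.
Qed.

Lemma mvt_ineq (R : realType) (X : normedModType R) (phi : R -> X) (M : R) :
  (forall s, 0 <= s <= 1 -> forall e, 0 < e ->
     \forall h \near (0:R), `|phi (s + h) - phi s| <= (M + e) * `|h|) ->
  `|phi 1 - phi 0| <= M.
Proof.
move=> Hd.
suff H : forall k, 0 < k -> `|phi 1 - phi 0| <= M + k.
  by apply/ler_addgt0Pr.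
move=> k k0; set K := M + k.
pose S := [set s : R | 0 <= s <= 1 /\
  forall s', 0 <= s' <= s -> `|phi s' - phi 0| <= K * s'].
have S0 : S 0.
  split; first by rewrite lexx ler01.
  move=> s' /andP[s'0 s'0']; have -> : s' = 0 by apply/eqP; rewrite eq_le s'0 s'0'.
  by rewrite subrr normr0 mulr0.
have hs : has_sup S.
  split; first by exists 0.
  by exists 1 => s [/andP[_ ->]].
set sig := sup S.
have sig0 : 0 <= sig by apply: sup_upper_bound.
have sig1 : sig <= 1 by apply: ge_sup; [exists 0 | move=> s [/andP[_ ->]]].
have goodlt : forall s', 0 <= s' < sig -> `|phi s' - phi 0| <= K * s'.
  move=> s' /andP[s'0 lt].
  have eps0 : 0 < sig - s' by rewrite subr_gt0.
  have [e [_ He] lte] := @sup_adherent R S (sig - s') eps0 hs.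
  apply: He; rewrite s'0 /=; rewrite opprB addrC subrK in lte.
  by apply: ltW.
have [d d0 Hdd] := near0P (Hd sig (introT andP (conj sig0 sig1)) k k0).
have good : `|phi sig - phi 0| <= K * sig.
  have [sig00|sigp] : sig = 0 \/ 0 < sig.
    by move: sig0; rewrite le_eqVlt => /orP[/eqP->|->]; [left|right].
    by rewrite sig00 subrr normr0 mulr0.
  have [m [m0 md ms]] := minpos d0 sigp.
  have h1 := Hdd (- m); rewrite normrN gtr0_norm // in h1.
  have h2 := goodlt (sig + - m).
  have := ler_distD (phi (sig + - m)) (phi sig) (phi 0).
  rewrite [X in _ <= X + _]distrC.
  have -> : K * sig = K * m + K * (sig + - m) by lra.
  move=> h; apply: (le_trans h); apply: lerD; first exact: h1 md.
  apply: h2; apply/andP; split; lra.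
have [lt1|ge1] := ltP sig 1.
  have lt1p : 0 < 1 - sig by rewrite subr_gt0.
  have [m [m0 md ms]] := minpos d0 lt1p.
  suff : S (sig + m) by move=> /(sup_upper_bound hs); rewrite -/sig; lra.
  split; first by apply/andP; split; lra.
  move=> s' /andP[s'0 s'le].
  have [s'lt|s'ge] := ltP s' sig; first by apply: goodlt; rewrite s'0 s'lt.
  have h1 := Hdd (s' - sig).
  rewrite ger0_norm in h1; last by lra.
  have := ler_distD (phi sig) (phi s') (phi 0).
  have -> : K * s' = K * (s' - sig) + K * sig by lra.
  move=> h; apply: (le_trans h); apply: lerD; last exact: good.
  rewrite [sig + _]addrC subrK in h1; apply: h1; lra.
have e1 : sig = 1 by apply/eqP; rewrite eq_le sig1 ge1.
by move: good; rewrite e1 mulr1.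
Qed.

Lemma der_cvg {R : realType} {V : normedModType R} (u : R -> V) :
  derivable u 0 1 -> (fun h : R => h^-1 *: (u h - u 0)) @ 0^' --> 'D_1 u 0.
Proof.
move=> d.
have -> : (fun h : R => h^-1 *: (u h - u 0)) =
          (fun h : R => h^-1 *: ((u \o shift 0) (h *: 1) - u 0)).
  by apply: funext => h /=; rewrite addr0 [h *: 1]mulr1.
exact: d.
Qed.

Lemma cvg_der {R : realType} {V : normedModType R} (u : R -> V) (l : V) :
  (fun h : R => h^-1 *: (u h - u 0)) @ 0^' --> l ->
  derivable u 0 1 /\ 'D_1 u 0 = l.
Proof.
have E : (fun h : R => h^-1 *: (u h - u 0)) =
          (fun h : R => h^-1 *: ((u \o shift 0) (h *: 1) - u 0)).
  by apply: funext => h /=; rewrite addr0 [h *: 1]mulr1.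
rewrite E => H; split; first by apply/cvg_ex; exists l.
exact: cvg_lim.
Qed.

Lemma chain_core {R : realType} {V W : normedModType R} (u : R -> V) (u' : V)
  (G : R -> W) (L : V -> W) (C : R) :
  (forall v w, L (v - w) = L v - L w) ->
  (forall (a : R) v, L (a *: v) = a *: L v) ->
  (forall v, `|L v| <= C * `|v|) ->
  (fun h => h^-1 *: (u h - u 0)) @ 0^' --> u' ->
  (forall e, 0 < e -> \forall h \near (0:R),
       `|G h - G 0 - L (u h - u 0)| <= e * `|u h - u 0|) ->
  (fun h => h^-1 *: (G h - G 0)) @ 0^' --> L u'.
Proof.
move=> Lsub Lsc Lb du Hr.
apply/cvgrPdist_le => eps eps0.
have C0 : 0 < `|C| + 1 by rewrite ltr_pwDr // normr_ge0.
have U0 : 0 < `|u'| + 1 by rewrite ltr_pwDr // normr_ge0.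
have e1 : 0 < eps / 2 / (`|C| + 1) by rewrite !divr_gt0.
have e2 : 0 < eps / 2 / (`|u'| + 1) by rewrite !divr_gt0.
move/cvgrPdist_le : du => du.
have n1 := du _ e1.
have n2 := du _ ltr01.
have n3 := Hr _ e2.
near=> h.
have hn0 : h != 0 by near: h; exact: nbhs_dnbhs_neq.
have q1 : `|u' - h^-1 *: (u h - u 0)| <= eps / 2 / (`|C| + 1) by near: h.
have q2 : `|u' - h^-1 *: (u h - u 0)| <= 1 by near: h.
have q3 : `|G h - G 0 - L (u h - u 0)| <= eps / 2 / (`|u'| + 1) * `|u h - u 0|.
  by near: h; apply: cvg_within; exact: n3.
set q := h^-1 *: (u h - u 0) in q1 q2.
have eq : h^-1 *: (G h - G 0) = L q + h^-1 *: (G h - G 0 - L (u h - u 0)).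
  by rewrite /q Lsc -scalerDr [L _ + _]addrC subrK.
rewrite eq opprD addrA.
apply: (le_trans (ler_normD _ _)).
rewrite (splitr eps); apply: lerD.
  rewrite -Lsub; apply: (le_trans (Lb _)).
  have Cn : C * `|u' - q| <= `|C| * `|u' - q|.
    by apply: ler_wpM2r; [exact: normr_ge0 | exact: ler_norm].
  apply: (le_trans Cn).
  have -> : eps / 2 = (`|C| + 1) * (eps / 2 / (`|C| + 1)).
    by rewrite [RHS]mulrC divfK // gt_eqF.
  by apply: ler_pM; rewrite ?normr_ge0 ?lerDl.
rewrite normrN normrZ normfV.
set e2' := eps / 2 / (`|u'| + 1) in q3 *.
have Hq : `|q| = `|h|^-1 * `|u h - u 0| by rewrite /q normrZ normfV.
have qb : `|q| <= `|u'| + 1.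
  have := ler_distD u' q 0; rewrite !subr0 distrC => t.
  by apply: (le_trans t); rewrite addrC; apply: lerD.
apply: (le_trans (ler_wpM2l _ q3)); first by rewrite invr_ge0 normr_ge0.
rewrite mulrCA -Hq.
have -> : eps / 2 = e2' * (`|u'| + 1) by rewrite /e2' divfK // gt_eqF.
apply: ler_wpM2l => //; exact: ltW.
Unshelve. all: by end_near.
Qed.


Lemma grp_id (V : zmodType) (F1 Fz sa ha hb : V) :
  F1 - (sa + ha) - (Fz - sa) = F1 - Fz - hb + (hb - ha).
Proof.
rewrite [RHS]addrA subrK opprD addrA [F1 - sa - ha]addrAC -addrA opprB.
by rewrite -addrA -addrA addKr addrA addrAC.
Qed.

Lemma taylor_near {R : realType} {X X0 : normedModType R} (T : X0 -> X) (x0 : X0) :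
  T x0 = 0 -> (fun x => `|T x| / `|x - x0|) @ x0^' --> (0:R) ->
  forall e, 0 < e -> \forall x \near x0, `|T x| <= e * `|x - x0|.
Proof.
move=> T0 /cvgrPdist_le H e e0.
have := H e e0; rewrite near_withinE; apply: filterS => x Hx.
have [->|xn] := eqVneq x x0; first by rewrite T0 normr0 subrr normr0 mulr0.
have := Hx xn; rewrite sub0r normrN ger0_norm ?divr_ge0 ?normr_ge0 //.
rewrite ler_pdivrMr // normr_gt0 subr_eq0 //.
Qed.

Lemma near_line {R : realType} {V : normedModType R} (z w : V) (P : V -> Prop) :
  (\forall x \near z, P x) -> \forall h \near (0:R), P (z + h *: w).
Proof.
move/nbhs_ballP=> [d d0 Hd]; apply/nbhs_ballP.
have w1 : 0 < `|w| + 1 by rewrite ltr_pwDr // normr_ge0.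
exists (d / (`|w| + 1)); first by rewrite /= divr_gt0.
move=> h; rewrite -ball_normE /= sub0r normrN => hh; apply: Hd.
rewrite -ball_normE /= opprD addrA subrr sub0r normrN normrZ.
apply: (le_lt_trans (y := `|h| * (`|w| + 1))).
  by rewrite ler_wpM2l ?normr_ge0 // lerDl.
by rewrite -ltr_pdivlMr.
Qed.

Lemma frak_rem {R : realType} {X X0 : completeNormedModType R} (i : {linear X0 -> X})
  (U0 : set X0) (F : X0 -> X) (DF : X0 -> {linear X -> X}) (x0 : X0) :
  frakC1 i U0 F DF -> U0 x0 -> forall e, 0 < e ->
  \forall x \near x0, `|F x - F x0 - DF x0 (i x - i x0)| <= e * `|i x - i x0|.
Proof.
move=> [oU Hb Ht Hc] Ux0 e e0.
have nU : \forall x \near x0, U0 x by apply: open_nbhs_nbhs; split.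
have [r r0 Hr] := (nbhs_ballP _ _).1 (filterI nU (Hc x0 Ux0 e e0)).
near=> x.
have bx : ball x0 r x by near: x; exact: near_ball.
set w := x - x0.
pose phi := fun s : R => F (x0 + s *: w) - s *: DF x0 (i w).
have -> : F x - F x0 - DF x0 (i x - i x0) = phi 1 - phi 0.
  have xw : x0 + w = x by rewrite /w addrC subrK.
  by rewrite /phi !scale1r !scale0r addr0 subr0 xw /w (linearB i) addrAC.
have -> : i x - i x0 = i w by rewrite /w (linearB i).
apply: mvt_ineq => s /andP[s0 s1] e' e'0.
set z := x0 + s *: w.
have bz : ball x0 r z.
  move: bx; rewrite -!ball_normE /= /z opprD addrA subrr sub0r normrN normrZ.
  rewrite /w distrC; apply: le_lt_trans.
  by rewrite ger0_norm // -[X in _ <= X]mul1r ler_wpM2r ?normr_ge0.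
have [Uz Dz] := Hr _ bz.
have w1 : 0 < `|w| + 1 by rewrite ltr_pwDr // normr_ge0.
have e''0 : 0 < e' / (`|w| + 1) by rewrite divr_gt0.
have T0 : (fun x' => F x' - F z - DF z (i x' - i z)) z = 0.
  by rewrite /= !subrr linear0 subr0.
have Tz := taylor_near (fun x' => F x' - F z - DF z (i x' - i z)) z T0 (Ht z Uz) _ e''0.
have := near_line z w _ Tz.
apply: filterS => h Hh.
have E1 : x0 + (s + h) *: w = z + h *: w by rewrite scalerDl addrA.
have E2 : i (z + h *: w) - i z = h *: i w.
  by rewrite linearD linearZ addrC addKr.
have E3 : z + h *: w - z = h *: w by rewrite addrC addKr.
rewrite E2 E3 normrZ linearZ in Hh.
rewrite /phi E1 scalerDl (grp_id _ _ _ _ _ (h *: DF z (i w))).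
apply: (le_trans (ler_normD _ _)).
rewrite mulrDl [X in _ <= X]addrC; apply: lerD.
  rewrite -/z; apply: (le_trans Hh).
  rewrite mulrCA [X in _ <= X]mulrC ler_wpM2l ?normr_ge0 //.
  rewrite mulrAC ler_pdivrMr // ler_wpM2l ?lerDl //; exact: ltW.
have Hx : `|h *: (DF z (i w) - DF x0 (i w))| <= e * `|i w| * `|h|.
  rewrite normrZ [X in _ <= X]mulrC ler_wpM2l ?normr_ge0 //.
by move: Hx; rewrite scalerBr.
Unshelve. all: by end_near.
Qed.

Theorem lemma2p7 (R : realType) (X X0 : completeNormedModType R)
    (i : {linear X0 -> X}) (M M0 : topologicalType) (j : M0 -> M)
    (A : set (set M * (M -> X)))
    (hM : banach_manifold M X) (hM0 : banach_manifold M0 X0)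
    (hemb : C1_embedded i j A) (hspread : inward_spreadable i j A)
    (eta : M0) (f : R -> M0) (hf0 : f 0 = eta)
    (hstrong : strongly_differentiable_at0 i j A f) :
  (forall c, A c -> c.1 (j eta) ->
     (\forall t \near (0 : R), c.1 (j (f t))) /\
     derivable (fun t : R => c.2 (j (f t))) 0 1) /\
  (forall c d, A c -> A d -> c.1 (j eta) -> d.1 (j eta) ->
     forall (phi0 : M0 -> X0), restricts i j c phi0 ->
     forall (F : X0 -> X) (DF : X0 -> {linear X -> X}),
       (forall m, c.1 (j m) -> d.1 (j m) -> F (phi0 m) = d.2 (j m)) ->
       frakC1 i (phi0 @` (j @^-1` (c.1 `&` d.1))) F DF ->
       'D_1 (fun t : R => d.2 (j (f t))) 0 =
         DF (phi0 eta) ('D_1 (fun t : R => c.2 (j (f t))) 0)).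

Proof.
case: hemb => [[Achart Hdense] [jinj jopen] D3 D4 D5].
have [iinj _ [Ci Ci0 Cib]] := Hdense.
case: hstrong => c0 [p0 [Ac0 c0f0 restr0 near0 dg]].
subst eta.
have runiq : forall c (phi1 phi2 : M0 -> X0), restricts i j c phi1 ->
    restricts i j c phi2 -> forall m, c.1 (j m) -> phi1 m = phi2 m.
  by move=> c p1 p2 r1 r2 m cm; apply: iinj; rewrite r1 // r2.
have gcont : (fun t => p0 (f t)) @ (0:R) --> p0 (f 0).
  by apply/differentiable_continuous/derivable1_diffP.
have fconv : forall W : set M0, nbhs (f 0) W -> \forall t \near (0:R), W (f t).
  move=> W; rewrite nbhsE; move=> [Ob [oO Of0] OW].
  have [phi' [r' [oU' inj' cont' om']]] := D4 (f 0) c0 Ac0 c0f0.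
  have oc0 : open c0.1 by case: (Achart c0 Ac0).
  have Hsub : Ob `&` (j @^-1` c0.1) `<=` j @^-1` c0.1 by move=> x [].
  have oimg := om' _ (openI oO oU') Hsub.
  have e0 : phi' (f 0) = p0 (f 0) by apply: (runiq c0).
  have nimg : nbhs (p0 (f 0)) (phi' @` (Ob `&` (j @^-1` c0.1))).
    apply: open_nbhs_nbhs; split => //; rewrite -e0; by exists (f 0).
  have := gcont _ nimg.
  move=> H; near=> t.
  have [w [Ow Uw] ew] : (phi' @` (Ob `&` (j @^-1` c0.1))) (p0 (f t)).
    by near: t.
  have ct : c0.1 (j (f t)) by near: t.
  apply: OW; suff -> : f t = w by [].
  apply: inj'; rewrite ?inE //.
  by rewrite ew; apply: (runiq c0).
have conj1 : forall c, A c -> c.1 (j (f 0)) ->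
    (\forall t \near (0:R), c.1 (j (f t))) /\
    derivable (fun t : R => c.2 (j (f t))) 0 1 /\
    forall (phi0 : M0 -> X0), restricts i j c phi0 ->
      (fun t => phi0 (f t)) @ (0:R) --> phi0 (f 0).
  move=> c Ac ceta.
  have oc : open c.1 by case: (Achart c Ac).
  have cnear : \forall t \near (0:R), c.1 (j (f t)).
    by apply: (fconv (j @^-1` c.1)); apply: open_nbhs_nbhs; split => //; apply: jopen.
  split => //; split; last first.
    move=> phi0 rphi0 W HW.
    have [phi' [r' [oU' inj' cont' om']]] := D4 (f 0) c Ac ceta.
    rewrite continuous_open_subspace // in cont'.
    have e0 : phi' (f 0) = phi0 (f 0) by apply: (runiq c).
    have Hin : f 0 \in j @^-1` c.1 by rewrite inE.
    have H : nbhs (f 0) (phi' @^-1` W) by apply: (cont' (f 0) Hin); rewrite e0.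
    have H2 := fconv _ H.
    suff : \forall t \near (0:R), W (phi0 (f t)) by [].
    near=> t.
    have ct : c.1 (j (f t)) by near: t.
    have Wt : W (phi' (f t)) by near: t.
    by rewrite -(runiq c phi' phi0).
  have [Tr _] := D5 (f 0) c0 c Ac0 Ac c0f0 ceta.
  have [F2 [DF2 [eqF2 fr2]]] := Tr p0 restr0.
  set g := fun t => p0 (f t).
  have Ug0 : (p0 @` (j @^-1` (c0.1 `&` c.1))) (g 0) by exists (f 0).
  have fr2' := fr2; case: fr2' => [_ Hb2 Ht2 _].
  have [C2 HC2] := Hb2 (g 0) Ug0.
  have Lb : forall v, `|DF2 (g 0) (i v)| <= (`|C2| * Ci) * `|v|.
    move=> v; apply: (le_trans (HC2 _)); apply: (le_trans (y := `|C2| * `|i v|)).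
      by apply: ler_wpM2r; [exact: normr_ge0 | exact: ler_norm].
    by rewrite -mulrA; apply: ler_wpM2l; [exact: normr_ge0 | exact: Cib].
  have Hrem : forall e, 0 < e -> \forall h \near (0:R),
      `|c.2 (j (f h)) - c.2 (j (f 0)) - DF2 (g 0) (i (g h - g 0))| <= e * `|g h - g 0|.
    move=> e e0.
    have T0 : (fun x => F2 x - F2 (g 0) - DF2 (g 0) (i x - i (g 0))) (g 0) = 0.
      by rewrite /= !subrr linear0 subr0.
    have Tn := taylor_near _ (g 0) T0 (Ht2 (g 0) Ug0) e e0.
    have H := gcont _ Tn; near=> h.
    have ch : c.1 (j (f h)) by near: h.
    have c0h : c0.1 (j (f h)) by near: h.
    have Th : `|F2 (g h) - F2 (g 0) - DF2 (g 0) (i (g h) - i (g 0))| <= e * `|g h - g 0|.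
      by near: h.
    by rewrite -(eqF2 (f h) c0h ch) -(eqF2 (f 0) c0f0 ceta) (linearB i).
  have Ls : forall v w, DF2 (g 0) (i (v - w)) = DF2 (g 0) (i v) - DF2 (g 0) (i w).
    by move=> v w; rewrite !linearB.
  have Lz : forall (a : R) v, DF2 (g 0) (i (a *: v)) = a *: DF2 (g 0) (i v).
    by move=> a v; rewrite !linearZ.
  have H := chain_core g ('D_1 g 0) (fun t => c.2 (j (f t)))
     (fun v => DF2 (g 0) (i v)) (`|C2| * Ci) Ls Lz Lb (der_cvg _ dg) Hrem.
  by have [] := cvg_der _ _ H.
split.
  by move=> c Ac ceta; have [? [? _]] := conj1 c Ac ceta.
move=> c d Ac Ad ceta deta phi0 rphi0 F DF eqF frF.
have [cn [cd cph]] := conj1 c Ac ceta.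
have [dn [dd _]] := conj1 d Ad deta.
have ycont := cph phi0 rphi0.
set x0 := phi0 (f 0).
have Ux0 : (phi0 @` (j @^-1` (c.1 `&` d.1))) x0 by exists (f 0).
have frF' := frF; case: frF' => [_ Hb3 _ _].
have [C3 HC3] := Hb3 x0 Ux0.
have Lb : forall v, `|DF x0 v| <= `|C3| * `|v|.
  move=> v; apply: (le_trans (HC3 v)).
  by apply: ler_wpM2r; [exact: normr_ge0|exact: ler_norm].
have Ls : forall v w, DF x0 (v - w) = DF x0 v - DF x0 w.
  by move=> v w; rewrite linearB.
have Lz : forall (a : R) v, DF x0 (a *: v) = a *: DF x0 v.
  by move=> a v; rewrite linearZ.
have Hrem : forall e, 0 < e -> \forall h \near (0:R),
   `|d.2 (j (f h)) - d.2 (j (f 0)) - DF x0 (c.2 (j (f h)) - c.2 (j (f 0)))|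
     <= e * `|c.2 (j (f h)) - c.2 (j (f 0))|.
  move=> e e0.
  have H := ycont _ (frak_rem _ _ _ _ _ frF Ux0 _ e0).
  near=> h.
  have ch : c.1 (j (f h)) by near: h.
  have dh : d.1 (j (f h)) by near: h.
  have Th : `|F (phi0 (f h)) - F x0 - DF x0 (i (phi0 (f h)) - i x0)|
      <= e * `|i (phi0 (f h)) - i x0| by near: h.
  by rewrite -(eqF _ ch dh) -(eqF _ ceta deta) -(rphi0 _ ch) -(rphi0 _ ceta).
have H := chain_core (fun t => c.2 (j (f t))) ('D_1 (fun t => c.2 (j (f t))) 0)
  (fun t => d.2 (j (f t))) (DF x0) `|C3| Ls Lz Lb (der_cvg _ cd) Hrem.
by have [] := cvg_der _ _ H.
Unshelve. all: by end_near.
Qed.
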